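(* Let $A,B\in\mathrm{SL}_2\mathbb{R}$ be noncommuting hyperbolic matrices with $\mathrm{tr}(A),\mathrm{tr}(B)\ge 2$, and assume that the pair $A,B$ is coherently oriented with $I^+\cap I^-=\emptyset$. Then $\ell(AB)$ is less than, equal to, or greater than $\ell(A)+\ell(B)$ if and only if the translation axes of $A$ and $B$ are intersecting, asymptotically parallel (distinct, sharing an ideal endpoint), or ultraparallel (disjoint with no common ideal endpoint), respectively.
   Context: $\mathrm{SL}_2\mathbb{R}$ acts on the hyperbolic plane $\mathcal{H}=\{z\in\mathbb{C}:\operatorname{Im}z>0\}$ and on its boundary $\partial\mathcal{H}=\mathbb{P}^1\mathbb{R}$ by Möbius transformations. A nonidentity matrix of trace $\ge 2$ is parabolic (one fixed point in $\partial\mathcal{H}$, trace $=2$) or hyperbolic (two fixed points, trace $>2$). For a hyperbolic $A$, $\alpha^+$ denotes its attracting fixed point and $\alpha^-$ its repelling one (similarly $\beta^\pm$ for $B$); for parabolic $A$, $\alpha^+=\alpha^-$ is its unique fixed point. The translation length is $\ell(A)=\inf\{d(z,A*z):z\in\mathcal{H}\}$ ($d$ the hyperbolic distance); for hyperbolic $A$ the translation axis is the geodesic with endpoints $\alpha^+,\alpha^-$. The circle $\partial\mathcal{H}$ is cyclically (counterclockwise) ordered, and for distinct $\alpha,\beta$ the closed interval $[\alpha,\beta]$ consists of $\alpha,\beta$ and the points met travelling counterclockwise from $\alpha$ to $\beta$. For noncommuting $A,B$ of trace $\ge2$: if $\alpha^+=\beta^+$ let $I^+=\{\alpha^+\}$;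 otherwise $I^+$ is the one of the two intervals $[\alpha^+,\beta^+]$, $[\beta^+,\alpha^+]$ mapped into itself by both $A$ and $B$, if such exists (else $I^+$ is undefined). $I^-$ is defined in the same way using $A^{-1},B^{-1}$ and $\alpha^-,\beta^-$. The pair $A,B$ is coherently oriented if both $I^+$ and $I^-$ are defined. *)

(* Defs.v *)
From Stdlib Require Import Reals Lra.
From Coquelicot Require Import Coquelicot.
Open Scope R_scope.

Record M2 := mkM2 { m11 : R; m12 : R; m21 : R; m22 : R }.

Definition mmul (A B : M2) : M2 :=
  mkM2 (m11 A * m11 B + m12 A * m21 B) (m11 A * m12 B + m12 A * m22 B)
       (m21 A * m11 B + m22 A * m21 B) (m21 A * m12 B + m22 A * m22 B).

Definition mdet (A : M2) : R := m11 A * m22 A - m12 A * m21 A.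
Definition mtr (A : M2) : R := m11 A + m22 A.

(** inverse of a determinant-one matrix *)
Definition minv (A : M2) : M2 := mkM2 (m22 A) (- m12 A) (- m21 A) (m11 A).

Definition in_SL2 (A : M2) : Prop := mdet A = 1.

Definition hyperbolic (A : M2) : Prop := 2 < mtr A.
Definition parabolic (A : M2) : Prop := A <> mkM2 1 0 0 1 /\ mtr A = 2.

Definition in_H (z : C) : Prop := 0 < Im z.

Definition mob (A : M2) (z : C) : C :=
  Cdiv (Cplus (Cmult (RtoC (m11 A)) z) (RtoC (m12 A)))
       (Cplus (Cmult (RtoC (m21 A)) z) (RtoC (m22 A))).

Definition arcosh (x : R) : R := ln (x + sqrt (x ^ 2 - 1)).

Definition hdist (z w : C) : R :=
  arcosh (1 + (Cmod (Cminus z w)) ^ 2 / (2 * Im z * Im w)).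

Definition tlen (A : M2) : R :=
  real (Glb_Rbar (fun r => exists z, in_H z /\ r = hdist z (mob A z))).

(** Boundary P^1(R) = R u {oo}, with None standing for oo *)
Definition P1 := option R.

Definition act (A : M2) (p : P1) : P1 :=
  match p with
  | None => if Req_EM_T (m21 A) 0 then None else Some (m11 A / m21 A)
  | Some x =>
      if Req_EM_T (m21 A * x + m22 A) 0 then None
      else Some ((m11 A * x + m12 A) / (m21 A * x + m22 A))
  end.

(** the point of P^1 R given by the line through (x, y) <> (0,0) *)
Definition proj (x y : R) : P1 := if Req_EM_T y 0 then None else Some (x / y).

Definition fixed (A : M2) (p : P1) : Prop := act A p = p.

Definition eigenline (A : M2) (l : R) (p : P1) : Prop :=
  exists x y, (x <> 0 \/ y <> 0) /\
    m11 A * x + m12 A * y = l * x /\ m21 A * x + m22 A * y = l * y /\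
    p = proj x y.

(** attracting / repelling fixed points (for parabolic A, the unique fixed
    point); for hyperbolic A of positive trace they are the eigenlines of the
    eigenvalue > 1, resp. in (0,1). *)
Definition attr_fp (A : M2) (p : P1) : Prop :=
  (parabolic A /\ fixed A p) \/
  (hyperbolic A /\ exists l, 1 < l /\ eigenline A l p).

Definition rep_fp (A : M2) (p : P1) : Prop :=
  (parabolic A /\ fixed A p) \/
  (hyperbolic A /\ exists l, 0 < l < 1 /\ eigenline A l p).

(** Counterclockwise cyclic order on P^1 R = boundary of H:
    increasing along R, then through oo.
    [strictly_between a b x]: x is met strictly after a and strictly
    before b when travelling counterclockwise from a (a <> b). *)
Definition strictly_between (a b x : P1) : Prop :=
  match a, b, x with
  | Some a, Some b, Some x => if Rlt_dec a b then a < x < b else (a < x \/ x < b)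
  | Some a, Some b, None => b < a
  | Some a, None, Some x => a < x
  | None, Some b, Some x => x < b
  | _, _, _ => False
  end.

Definition cinterval (a b : P1) (x : P1) : Prop :=
  x = a \/ x = b \/ strictly_between a b x.

Definition maps_into (f : P1 -> P1) (I : P1 -> Prop) : Prop :=
  forall x, I x -> I (f x).

Definition interval_choice (f g : P1 -> P1) (a b : P1) (I : P1 -> Prop) : Prop :=
  (a = b /\ forall x, I x <-> x = a) \/
  (a <> b /\
   ((forall x, I x <-> cinterval a b x) \/ (forall x, I x <-> cinterval b a x)) /\
   maps_into f I /\ maps_into g I).

Definition Iplus (A B : M2) (I : P1 -> Prop) : Prop :=
  exists ap bp, attr_fp A ap /\ attr_fp B bp /\
    interval_choice (act A) (act B) ap bp I.

Definition Iminus (A B : M2) (I : P1 -> Prop) : Prop :=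
  exists am bm, rep_fp A am /\ rep_fp B bm /\
    interval_choice (act (minv A)) (act (minv B)) am bm I.

Definition coherently_oriented (A B : M2) : Prop :=
  (exists I, Iplus A B I) /\ (exists I, Iminus A B I).

Definition on_geodesic (p q : P1) (z : C) : Prop :=
  in_H z /\
  match p, q with
  | Some x, Some y => x <> y /\ (Re z - (x + y) / 2) ^ 2 + Im z ^ 2 = ((x - y) / 2) ^ 2
  | Some x, None => Re z = x
  | None, Some y => Re z = y
  | None, None => False
  end.

Definition geod_intersecting (p1 q1 p2 q2 : P1) : Prop :=
  exists z, on_geodesic p1 q1 z /\ on_geodesic p2 q2 z.

Definition same_endpoints (p1 q1 p2 q2 : P1) : Prop :=
  (p1 = p2 /\ q1 = q2) \/ (p1 = q2 /\ q1 = p2).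

Definition share_endpoint (p1 q1 p2 q2 : P1) : Prop :=
  p1 = p2 \/ p1 = q2 \/ q1 = p2 \/ q1 = q2.

Definition geod_asymptotically_parallel (p1 q1 p2 q2 : P1) : Prop :=
  ~ same_endpoints p1 q1 p2 q2 /\ share_endpoint p1 q1 p2 q2.

Definition geod_ultraparallel (p1 q1 p2 q2 : P1) : Prop :=
  ~ geod_intersecting p1 q1 p2 q2 /\ ~ share_endpoint p1 q1 p2 q2.

(* Main.v *)
Require Import Defs.
From Stdlib Require Import Reals Lra Psatz Classical.
From Coquelicot Require Import Coquelicot.
Open Scope R_scope.


Lemma arcosh_le x y : 1 <= x -> x <= y -> arcosh x <= arcosh y.
Proof.
  intros H1 H2. unfold arcosh. apply ln_le.
  - assert (0 <= sqrt (x^2-1)) by apply sqrt_pos. lra.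
  - apply Rplus_le_compat; auto. apply sqrt_le_1_alt. nra.
Qed.

Lemma mob_im a b c d x y : 0 < y -> a*d - b*c = 1 ->
  let N := (c*x+d)^2 + (c*y)^2 in
  0 < N /\
  Re (mob (mkM2 a b c d) (x,y)) = ((a*x+b)*(c*x+d) + a*c*y^2)/N /\
  Im (mob (mkM2 a b c d) (x,y)) = y/N.
Proof.
  intros Hy Hd N.
  assert (HN : 0 < N).
  { unfold N. destruct (Req_dec c 0) as [->|Hc].
    - assert (d <> 0) by (intro; subst; lra). 
      assert (0 < d^2) by (apply pow2_gt_0; auto). nra.
    - assert (0 < (c*y)^2) by (apply pow2_gt_0; apply Rmult_integral_contrapositive; split; lra).
      assert (0 <= (c*x+d)^2) by apply pow2_ge_0. lra. }
  split; auto.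
  unfold mob, Cdiv, Cinv, Cmult, Cplus, RtoC, Re, Im; simpl.
  assert (E: (c*x - 0*y + d)*((c*x-0*y+d)*1) + (c*y + 0*x + 0)*((c*y+0*x+0)*1) = N) by (unfold N; ring).
  rewrite E. split; [field; lra|].
  transitivity (y*(a*d-b*c)/N); [field; lra|]. rewrite Hd. field; lra.
Qed.

Lemma hdist_mob a b c d x y : 0 < y -> a*d - b*c = 1 ->
  hdist (x,y) (mob (mkM2 a b c d) (x,y)) =
  arcosh ((a+d)^2/2 - 1 + (c*x^2 + (d-a)*x - b + c*y^2)^2/(2*y^2)).
Proof.
  intros Hy Hd.
  destruct (mob_im a b c d x y Hy Hd) as [HN [Hre Him]].
  set (N := (c*x+d)^2 + (c*y)^2) in *.
  unfold hdist. f_equal.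
  set (w := mob (mkM2 a b c d) (x,y)) in *.
  assert (Hm : Cmod (Cminus (x,y) w) ^ 2 = (x - Re w)^2 + (y - Im w)^2).
  { unfold Cmod, Cminus, Cplus, Copp; cbn [fst snd]. rewrite pow2_sqrt.
    - unfold Re, Im; ring.
    - apply Rplus_le_le_0_compat; apply pow2_ge_0. }
  rewrite Hm. change (Im (x,y)) with y. rewrite Hre, Him.
  assert (S_eq : (x - ((a*x+b)*(c*x+d) + a*c*y^2)/N)^2 + (y - y/N)^2 =
     ((c*(x^2-y^2)+(d-a)*x-b)^2 + (y*(2*c*x+(d-a)))^2)/N).
  { replace (y/N) with (y*(a*d-b*c)/N) by (rewrite Hd; field; lra).
    unfold N in *. field. lra. }
  rewrite S_eq.
  transitivity (1 + ((d-a)^2+4*b*c)/2 + (c*x^2 + (d-a)*x - b + c*y^2)^2/(2*y^2)).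
  - field. split; lra.
  - replace ((d-a)^2+4*b*c) with ((a+d)^2 - 4*(a*d-b*c)) by ring. rewrite Hd. field. lra.
Qed.

Lemma tlen_formula M : mdet M = 1 -> 4 < mtr M ^ 2 -> tlen M = arcosh (mtr M ^ 2 / 2 - 1).
Proof.
  destruct M as [a b c d]. unfold mdet, mtr; simpl. intros Hd Ht.
  unfold tlen.
  rewrite (is_glb_Rbar_unique _ (Finite (arcosh ((a+d)^2/2-1)))); [reflexivity|].
  split.
  - intros r [[x y] [Hz ->]]. unfold in_H in Hz; simpl in Hz.
    rewrite hdist_mob; auto. apply arcosh_le; [lra|].
    assert (0 <= (c * x ^ 2 + (d - a) * x - b + c * y ^ 2) ^ 2 / (2 * y ^ 2)).
    { apply Rdiv_le_0_compat; [apply pow2_ge_0| nra]. }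
    lra.
  - intros bnd Hb.
    assert (He : (d-a)^2 + 4*b*c = (a+d)^2 - 4) by (replace ((a+d)^2 - 4) with ((a+d)^2 - 4*(a*d-b*c)) by (rewrite Hd; ring); ring).
    destruct (Req_dec c 0) as [Hc|Hc].
    + subst c. assert (Hda : d - a <> 0) by (intro Z; rewrite Z in He; nra).
      apply (Hb _). exists (b/(d-a), 1). split; [unfold in_H; simpl; lra|].
      rewrite hdist_mob; auto; try lra. f_equal.
      replace (0 * (b / (d - a)) ^ 2 + (d - a) * (b / (d - a)) - b + 0 * 1 ^ 2) with 0 by (field; auto).
      field.
    + assert (Hq : 0 < ((a+d)^2-4)/(4*c^2)).
      { apply Rdiv_lt_0_compat; [lra|]. assert (0 < c^2) by (apply pow2_gt_0; auto). lra. }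
      set (y0 := sqrt (((a+d)^2-4)/(4*c^2))).
      assert (Hy0 : 0 < y0) by (apply sqrt_lt_R0; auto).
      assert (Hy2 : y0^2 = ((a+d)^2-4)/(4*c^2)) by (apply pow2_sqrt; lra).
      apply (Hb _). exists (-(d-a)/(2*c), y0).
      split; [unfold in_H; simpl; auto|].
      rewrite hdist_mob; auto.
      f_equal.
      replace (c * (-(d-a) / (2 * c)) ^ 2 + (d-a) * (-(d-a) / (2 * c)) - b + c * y0^2) with 0.
      * field. lra.
      * rewrite Hy2, <- He. field; auto.
Qed.

Lemma arcosh_rho r : 1 < r -> arcosh ((r + /r)^2/2 - 1) = 2 * ln r.
Proof.
  intros Hr. unfold arcosh.
  assert (Hs : sqrt (((r + / r) ^ 2 / 2 - 1)^2 - 1) = (r^2 - /r^2)/2).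
  { replace (((r + / r) ^ 2 / 2 - 1)^2 - 1) with (((r^2 - /r^2)/2)^2) by (field; lra).
    apply sqrt_pow2.
    assert (/ r < 1). { apply (Rmult_lt_reg_l r); [lra|]. rewrite Rinv_r; lra. }
    assert (0 < /r) by (apply Rinv_0_lt_compat; lra).
    replace (/ r ^2) with (/r * /r) by (field; lra). nra. }
  rewrite Hs.
  replace ((r + / r) ^ 2 / 2 - 1 + (r ^ 2 - / r ^ 2) / 2) with (r * r) by (field; lra).
  rewrite ln_mult; lra.
Qed.


Definition cv1 (p:P1) : R := match p with Some a => a | None => 1 end.
Definition cv2 (p:P1) : R := match p with Some _ => 1 | None => 0 end.
Definition dd p q := cv1 p * cv2 q - cv2 p * cv1 q.

Lemma dd_eq p q : dd p q = 0 <-> p = q.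
Proof.
  destruct p as [p|], q as [q|]; unfold dd; simpl; split; intro H;
    try discriminate; try lra.
  - f_equal; lra.
  - inversion H; lra.
  - reflexivity.
Qed.

Lemma cv_nz p : cv1 p <> 0 \/ cv2 p <> 0.
Proof. destruct p; simpl; lra. Qed.

Lemma eig_canon A l p : eigenline A l p ->
  m11 A * cv1 p + m12 A * cv2 p = l * cv1 p /\ m21 A * cv1 p + m22 A * cv2 p = l * cv2 p.
Proof.
  intros [x [y [Hnz [E1 [E2 ->]]]]]. unfold proj.
  destruct (Req_EM_T y 0) as [->|Hy]; simpl.
  - assert (Hx : x <> 0) by lra.
    assert (Ha : (m11 A - l) * x = 0) by lra.
    assert (Hc : m21 A * x = 0) by lra.
    apply Rmult_integral in Ha; apply Rmult_integral in Hc.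
    split; [destruct Ha| destruct Hc]; lra.
  - split.
    + replace (m11 A * (x / y) + m12 A * 1) with ((m11 A * x + m12 A * y)/y) by (field; auto).
      rewrite E1. field; auto.
    + replace (m21 A * (x / y) + m22 A * 1) with ((m21 A * x + m22 A * y)/y) by (field; auto).
      rewrite E2. field; auto.
Qed.

Lemma eig_quad a b c d l x y : a*d - b*c = 1 -> (x <> 0 \/ y <> 0) ->
  a * x + b * y = l * x -> c * x + d * y = l * y -> l^2 - (a+d)*l + 1 = 0.
Proof.
  intros Hd Hnz E1 E2.
  assert (H1 : ((a-l)*(d-l) - b*c) * x = (d-l)*((a*x+b*y) - l*x) - b*((c*x+d*y) - l*y)) by ring.
  assert (H2 : ((a-l)*(d-l) - b*c) * y = (a-l)*((c*x+d*y) - l*y) - c*((a*x+b*y) - l*x)) by ring.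
  rewrite E1, E2 in H1, H2.
  replace (l^2 - (a+d)*l + 1) with ((a-l)*(d-l) - b*c) by (rewrite <- Hd; ring).
  destruct Hnz as [Hx|Hy].
  - apply (Rmult_eq_reg_r x); auto. rewrite H1; ring.
  - apply (Rmult_eq_reg_r y); auto. rewrite H2; ring.
Qed.

Lemma entries a b c d l k u1 u2 v1 v2 :
  let D := u1*v2 - u2*v1 in D <> 0 ->
  a*u1 + b*u2 = l*u1 -> c*u1 + d*u2 = l*u2 ->
  a*v1 + b*v2 = k*v1 -> c*v1 + d*v2 = k*v2 ->
  a = (l*u1*v2 - k*v1*u2)/D /\ b = (k-l)*u1*v1/D /\
  c = (l-k)*u2*v2/D /\ d = (k*u1*v2 - l*u2*v1)/D.
Proof.
  intros D HD E1 E2 E3 E4.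
  assert (Ha : a * D = v2*(a*u1+b*u2) - u2*(a*v1+b*v2)) by (unfold D; ring).
  assert (Hb : b * D = u1*(a*v1+b*v2) - v1*(a*u1+b*u2)) by (unfold D; ring).
  assert (Hc : c * D = v2*(c*u1+d*u2) - u2*(c*v1+d*v2)) by (unfold D; ring).
  assert (Hd : d * D = u1*(c*v1+d*v2) - v1*(c*u1+d*u2)) by (unfold D; ring).
  rewrite E1, E2, E3, E4 in *.
  repeat split; apply (Rmult_eq_reg_r D); auto.
  - rewrite Ha. field; auto.
  - rewrite Hb. field; auto.
  - rewrite Hc. field; auto.
  - rewrite Hd. field; auto.
Qed.

Definition Gc p q x y := (x*cv2 p - cv1 p)*(x*cv2 q - cv1 q) + y^2*cv2 p*cv2 q.

Lemma geod_c p q z : on_geodesic p q z <-> in_H z /\ Gc p q (Re z) (Im z) = 0.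
Proof.
  destruct z as [x y]. unfold on_geodesic, in_H, Gc.
  change (Re (x,y)) with x; change (Im (x,y)) with y.
  destruct p as [p|], q as [q|]; simpl cv1; simpl cv2.
  - assert (K : (x*1-p)*(x*1-q) + y^2*1*1 = (x - (p+q)/2)^2 + y^2 - ((p-q)/2)^2) by field.
    rewrite K. split.
    + intros [Hy [Hpq E]]. split; auto. lra.
    + intros [Hy E]. split; auto. split; [|lra]. intro Hpq; rewrite Hpq in E.
      assert (Hq: 0 <= (x - (q+q)/2)^2) by apply pow2_ge_0.
      assert (0 < y^2) by (apply pow2_gt_0; lra).
      replace (((q-q)/2)^2) with 0 in E by field. lra.
  - split; intros [Hy E]; split; auto; lra.
  - split; intros [Hy E]; split; auto; lra.
  - split; [intros [_ []]| intros [Hy E]; lra].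
Qed.

Lemma sb_c a b x : a <> b -> strictly_between b a x -> dd a x * dd b x * dd a b < 0.
Proof.
  intros Hab H.
  destruct a as [a|], b as [b|], x as [x|]; unfold dd; simpl in *; try tauto;
   try (destruct (Rlt_dec b a)); try nra.
  all: assert (a <> b) by congruence.
  - assert (0 < (a*1-1*x)*(1*x - b*1)) by nra. nra.
  - assert (a < b) by (destruct (Rtotal_order a b) as [?|[?|?]]; [auto|contradiction|tauto]).
    destruct H as [H|H]; assert (0 < (a*1-1*x)*(b*1-1*x)) by nra; nra.
Qed.

Lemma notin_cint a b x : a <> b -> ~ cinterval a b x -> strictly_between b a x.
Proof.
  intros Hab Hn. unfold cinterval in Hn.
  destruct a as [a|], b as [b|], x as [x|]; simpl in *; try tauto.
  - assert (a <> b) by congruence.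
    assert (x <> a) by (intro E; rewrite E in Hn; tauto).
    assert (x <> b) by (intro E; rewrite E in Hn; tauto).
    destruct (Rlt_dec a b) as [h1|h1], (Rlt_dec b a) as [h2|h2]; try lra.
  all: match goal with |- ?u < ?v => destruct (Rtotal_order u v) as [?|[E|?]] end;
    [auto| subst; exfalso; first [congruence | (apply Hn; auto)] | exfalso; apply Hn; right; right; lra].
Qed.

Lemma shared_geod p q s x y : 0 < y -> Gc p q x y = 0 -> Gc p s x y = 0 -> q = s.
Proof.
  intros Hy G1 G2. apply dd_eq.
  set (al := x*(x*cv2 p - cv1 p) + y^2*cv2 p). set (be := x*cv2 p - cv1 p).
  assert (E1 : dd q s * al = cv1 q * Gc p s x y - cv1 s * Gc p q x y) by (unfold dd, al, Gc; ring).
  assert (E2 : dd q s * be = cv2 q * Gc p s x y - cv2 s * Gc p q x y) by (unfold dd, be, Gc; ring).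
  rewrite G1, G2 in E1, E2.
  destruct (Req_dec (dd q s) 0) as [|Hn]; auto. exfalso.
  assert (Ha : al = 0) by (apply (Rmult_eq_reg_l (dd q s)); auto; lra).
  assert (Hb : be = 0) by (apply (Rmult_eq_reg_l (dd q s)); auto; lra).
  assert (H2 : y^2 * cv2 p = 0) by (replace (y^2 * cv2 p) with (al - x*be) by (unfold al, be; ring); rewrite Ha, Hb; ring).
  assert (0 < y^2) by (apply pow2_gt_0; lra).
  assert (Hc2 : cv2 p = 0) by (apply Rmult_integral in H2; destruct H2; lra).
  assert (cv1 p = 0) by (unfold be in Hb; rewrite Hc2 in Hb; lra).
  destruct (cv_nz p); auto.
Qed.

Definition ga p q := cv2 p * cv2 q.
Definition gb p q := - (cv2 p * cv1 q + cv1 p * cv2 q).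
Definition gc p q := cv1 p * cv1 q.

Lemma Gc_lin p q x y : Gc p q x y = ga p q * (x^2+y^2) + gb p q * x + gc p q.
Proof. unfold Gc, ga, gb, gc; ring. Qed.

Definition n1 (p q r s : P1) := gb p q * gc r s - gc p q * gb r s.
Definition n2 (p q r s : P1) := gc p q * ga r s - ga p q * gc r s.
Definition n3 (p q r s : P1) := ga p q * gb r s - gb p q * ga r s.
Definition PQ (p q r s : P1) := dd p s * dd r q * (dd p r * dd s q).
Lemma n_ident p q r s : n1 p q r s * n3 p q r s - n2 p q r s ^2 = - PQ p q r s.
Proof. unfold n1, n2, n3, PQ, ga, gb, gc, dd; ring. Qed.
Lemma n_ortho1 p q r s : ga p q * n1 p q r s + gb p q * n2 p q r s + gc p q * n3 p q r s = 0.
Proof. unfold n1, n2, n3; ring. Qed.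
Lemma n_ortho2 p q r s : ga r s * n1 p q r s + gb r s * n2 p q r s + gc r s * n3 p q r s = 0.
Proof. unfold n1, n2, n3; ring. Qed.

Lemma inter_le p q r s x y : Gc p q x y = 0 -> Gc r s x y = 0 -> PQ p q r s <= 0.
Proof.
  intros G1 G2.
  assert (K1 : n2 p q r s - n3 p q r s * x = ga r s * Gc p q x y - ga p q * Gc r s x y)
    by (rewrite !Gc_lin; unfold n2, n3; ring).
  assert (K2 : n3 p q r s * (x^2+y^2) - n1 p q r s = gb r s * Gc p q x y - gb p q * Gc r s x y)
    by (rewrite !Gc_lin; unfold n1, n3; ring).
  rewrite G1, G2 in K1, K2.
  assert (PQ p q r s = - (n3 p q r s ^ 2 * y^2)).
  { rewrite <- (Ropp_involutive (PQ p q r s)), <- n_ident.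
    replace (n2 p q r s) with (n3 p q r s * x) by lra.
    replace (n1 p q r s) with (n3 p q r s * (x^2+y^2)) by lra. ring. }
  rewrite H. assert (0 <= n3 p q r s ^ 2 * y^2) by (apply Rmult_le_pos; apply pow2_ge_0). lra.
Qed.

Lemma construct p q r s : PQ p q r s < 0 -> geod_intersecting p q r s.
Proof.
  intros H. pose proof (n_ident p q r s) as E.
  set (N1 := n1 p q r s) in *. set (N2 := n2 p q r s) in *. set (N3 := n3 p q r s) in *.
  assert (HN3 : N3 <> 0).
  { intro Z. rewrite Z in E. assert (0 <= N2^2) by apply pow2_ge_0. lra. }
  assert (Hq : 0 < (N1*N3 - N2^2)/N3^2).
  { apply Rdiv_lt_0_compat; [lra| apply pow2_gt_0; auto]. }
  set (y := sqrt ((N1*N3 - N2^2)/N3^2)).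
  assert (Hy : 0 < y) by (apply sqrt_lt_R0; auto).
  assert (Hy2 : y^2 = (N1*N3 - N2^2)/N3^2) by (apply pow2_sqrt; lra).
  assert (HR : (N2/N3)^2 + y^2 = N1/N3) by (rewrite Hy2; field; auto).
  exists (N2/N3, y). rewrite !geod_c. unfold in_H. change (Re (N2/N3, y)) with (N2/N3).
  change (Im (N2/N3, y)) with y. rewrite !Gc_lin, HR.
  pose proof (n_ortho1 p q r s) as O1. pose proof (n_ortho2 p q r s) as O2.
  fold N1 N2 N3 in O1, O2.
  split; split; auto.
  - replace (ga p q * (N1 / N3) + gb p q * (N2 / N3) + gc p q) with
      ((ga p q * N1 + gb p q * N2 + gc p q * N3)/N3) by (field; auto).
    rewrite O1. field; auto.
  - replace (ga r s * (N1 / N3) + gb r s * (N2 / N3) + gc r s) with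
      ((ga r s * N1 + gb r s * N2 + gc r s * N3)/N3) by (field; auto).
    rewrite O2. field; auto.
Qed.


Lemma roots t l k : l^2 - t*l + 1 = 0 -> k^2 - t*k + 1 = 0 -> k < l -> l*k = 1 /\ l + k = t.
Proof.
  intros E1 E2 Hkl.
  assert (Hs : (l - k) * (l + k - t) = 0) by (replace ((l - k) * (l + k - t)) with ((l^2 - t*l + 1) - (k^2 - t*k + 1)) by ring; lra).
  apply Rmult_integral in Hs. destruct Hs as [Hs|Hs]; [lra|].
  split; [|lra]. replace t with (l+k) in E1 by lra. nra.
Qed.

Lemma f_strict x y : 1 <= x -> x < y -> x + /x < y + /y.
Proof.
  intros Hx Hxy.
  assert (Hx0 : 0 < x) by lra. assert (Hy0 : 0 < y) by lra.
  assert (Hxy1 : x*y > 1) by nra.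
  assert (0 < (y - x)*(x*y - 1)/(x*y)).
  { apply Rdiv_lt_0_compat; [apply Rmult_lt_0_compat; lra| nra]. }
  assert (E : y + /y - (x + /x) = (y - x)*(x*y - 1)/(x*y)) by (field; lra). lra.
Qed.

Lemma cmp_f r X : 1 < r -> 1 < X ->
  (r + /r < X + /X -> r < X) /\ (r + /r = X + /X -> r = X) /\ (r + /r > X + /X -> r > X).
Proof.
  intros Hr HX.
  destruct (Rtotal_order r X) as [H|[H|H]].
  - pose proof (f_strict r X ltac:(lra) H). repeat split; intros; lra.
  - subst. repeat split; intros; lra.
  - pose proof (f_strict X r ltac:(lra) H). repeat split; intros; lra.
Qed.

Lemma trich_logic (g1 g2 g3 : Prop) (x L S : R) :
  (g1 -> x < 0) -> (g2 -> x = 0) -> (g3 -> x > 0) -> (g1 \/ g2 \/ g3) ->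
  (x < 0 -> L < S) -> (x = 0 -> L = S) -> (x > 0 -> L > S) ->
  (L < S <-> g1) /\ (L = S <-> g2) /\ (L > S <-> g3).
Proof.
  intros h1 h2 h3 hex k1 k2 k3.
  repeat split; intro H; auto;
  destruct hex as [G|[G|G]]; auto;
  try (specialize (h1 G)); try (specialize (h2 G)); try (specialize (h3 G)); 
  try (specialize (k1 h1)); try (specialize (k2 h2)); try (specialize (k3 h3)); lra.
Qed.


Lemma attr_data A p : hyperbolic A -> attr_fp A p -> exists l, 1 < l /\
  m11 A * cv1 p + m12 A * cv2 p = l * cv1 p /\ m21 A * cv1 p + m22 A * cv2 p = l * cv2 p.
Proof.
  intros hA [[[_ Ht] _]|[_ [l [Hl He]]]].
  - unfold hyperbolic in hA; lra.
  - exists l; split; auto. apply (eig_canon _ _ _ He).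
Qed.

Lemma rep_data A p : hyperbolic A -> rep_fp A p -> exists l, 0 < l < 1 /\
  m11 A * cv1 p + m12 A * cv2 p = l * cv1 p /\ m21 A * cv1 p + m22 A * cv2 p = l * cv2 p.
Proof.
  intros hA [[[_ Ht] _]|[_ [l [Hl He]]]].
  - unfold hyperbolic in hA; lra.
  - exists l; split; auto. apply (eig_canon _ _ _ He).
Qed.

Lemma eig_unique A l p q : mdet A = 1 -> l*l <> 1 ->
  m11 A * cv1 p + m12 A * cv2 p = l * cv1 p -> m21 A * cv1 p + m22 A * cv2 p = l * cv2 p ->
  m11 A * cv1 q + m12 A * cv2 q = l * cv1 q -> m21 A * cv1 q + m22 A * cv2 q = l * cv2 q ->
  p = q.
Proof.
  intros Hd Hl E1 E2 E3 E4. apply dd_eq.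
  destruct (Req_dec (dd p q) 0) as [|Hn]; auto. exfalso.
  destruct (entries _ _ _ _ l l _ _ _ _ Hn E1 E2 E3 E4) as [Ha [Hb [Hc Hdd]]].
  unfold mdet in Hd. rewrite Ha, Hb, Hc, Hdd in Hd. apply Hl. rewrite <- Hd.
  unfold dd in Hn. field. auto.
Qed.

Lemma quad_of A l p : mdet A = 1 ->
  m11 A * cv1 p + m12 A * cv2 p = l * cv1 p -> m21 A * cv1 p + m22 A * cv2 p = l * cv2 p ->
  l^2 - mtr A * l + 1 = 0.
Proof. intros Hd E1 E2. unfold mtr. apply (eig_quad (m11 A) (m12 A) (m21 A) (m22 A) l (cv1 p) (cv2 p)); auto. apply cv_nz. Qed.

Lemma attr_unique A p q : mdet A = 1 -> hyperbolic A -> attr_fp A p -> attr_fp A q -> p = q.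
Proof.
  intros Hd hA Hp Hq.
  destruct (attr_data A p hA Hp) as [l [Hl [E1 E2]]].
  destruct (attr_data A q hA Hq) as [l' [Hl' [E3 E4]]].
  pose proof (quad_of A l p Hd E1 E2). pose proof (quad_of A l' q Hd E3 E4).
  assert (l = l').
  { destruct (Rtotal_order l l') as [h|[h|h]]; auto.
    - destruct (roots _ _ _ H0 H h). nra.
    - destruct (roots _ _ _ H H0 h). nra. }
  subst l'. apply (eig_unique A l); auto. nra.
Qed.

Lemma rep_unique A p q : mdet A = 1 -> hyperbolic A -> rep_fp A p -> rep_fp A q -> p = q.
Proof.
  intros Hd hA Hp Hq.
  destruct (rep_data A p hA Hp) as [l [Hl [E1 E2]]].
  destruct (rep_data A q hA Hq) as [l' [Hl' [E3 E4]]].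
  pose proof (quad_of A l p Hd E1 E2). pose proof (quad_of A l' q Hd E3 E4).
  assert (l = l').
  { destruct (Rtotal_order l l') as [h|[h|h]]; auto.
    - destruct (roots _ _ _ H0 H h). nra.
    - destruct (roots _ _ _ H H0 h). nra. }
  subst l'. apply (eig_unique A l); auto. nra.
Qed.

Lemma distinct_eig A l k p q : l <> k ->
  m11 A * cv1 p + m12 A * cv2 p = l * cv1 p -> m21 A * cv1 p + m22 A * cv2 p = l * cv2 p ->
  m11 A * cv1 q + m12 A * cv2 q = k * cv1 q -> m21 A * cv1 q + m22 A * cv2 q = k * cv2 q ->
  dd p q <> 0.
Proof.
  intros Hlk E1 E2 E3 E4 H. apply dd_eq in H. subst q.
  assert (H1 : (l - k) * cv1 p = 0) by lra. assert (H2 : (l - k) * cv2 p = 0) by lra.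
  apply Rmult_integral in H1; apply Rmult_integral in H2.
  destruct (cv_nz p); destruct H1, H2; lra.
Qed.

Lemma in_I_self f g a b I : interval_choice f g a b I -> I a /\ I b.
Proof.
  intros [[E H]|[_ [[H|H] _]]]; split; apply H; unfold cinterval; auto.
Qed.

Lemma PD_pos fA fB gA gB ap bp am bm Ip Im :
  interval_choice fA fB ap bp Ip -> interval_choice gA gB am bm Im ->
  (forall x, ~ (Ip x /\ Im x)) ->
  0 < dd ap am * dd ap bm * dd bp am * dd bp bm.
Proof.
  intros HIp HIm Hdis.
  destruct (in_I_self _ _ _ _ _ HIm) as [Ia Ib].
  assert (Na : ~ Ip am) by (intro; apply (Hdis am); auto).
  assert (Nb : ~ Ip bm) by (intro; apply (Hdis bm); auto).
  destruct HIp as [[E H]|[Hne [[H|H] _]]].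
  - subst bp.
    assert (h1 : dd ap am <> 0) by (intro Z; apply dd_eq in Z; apply Na, H; auto).
    assert (h2 : dd ap bm <> 0) by (intro Z; apply dd_eq in Z; apply Nb, H; auto).
    assert (0 < (dd ap am * dd ap bm)^2) by (apply pow2_gt_0; apply Rmult_integral_contrapositive; auto).
    nra.
  - assert (S1 := sb_c ap bp am Hne (notin_cint _ _ _ Hne (fun h => Na (proj2 (H am) h)))).
    assert (S2 := sb_c ap bp bm Hne (notin_cint _ _ _ Hne (fun h => Nb (proj2 (H bm) h)))).
    assert (h : 0 < dd ap am * dd bp am * dd ap bp * (dd ap bm * dd bp bm * dd ap bp)) by nra.
    assert (Hs : 0 < (dd ap bp)^2) by (apply pow2_gt_0; intro Z; apply dd_eq in Z; auto).
    replace (dd ap am * dd bp am * dd ap bp * (dd ap bm * dd bp bm * dd ap bp)) with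
      ((dd ap am * dd ap bm * dd bp am * dd bp bm) * (dd ap bp)^2) in h by ring.
    destruct (Rle_or_lt (dd ap am * dd ap bm * dd bp am * dd bp bm) 0); auto. nra.
  - assert (Hne' : bp <> ap) by auto.
    assert (S1 := sb_c bp ap am Hne' (notin_cint _ _ _ Hne' (fun h => Na (proj2 (H am) h)))).
    assert (S2 := sb_c bp ap bm Hne' (notin_cint _ _ _ Hne' (fun h => Nb (proj2 (H bm) h)))).
    assert (h : 0 < dd bp am * dd ap am * dd bp ap * (dd bp bm * dd ap bm * dd bp ap)) by nra.
    assert (Hs : 0 < (dd bp ap)^2) by (apply pow2_gt_0; intro Z; apply dd_eq in Z; auto).
    replace (dd bp am * dd ap am * dd bp ap * (dd bp bm * dd ap bm * dd bp ap)) with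
      ((dd ap am * dd ap bm * dd bp am * dd bp bm) * (dd bp ap)^2) in h by ring.
    destruct (Rle_or_lt (dd ap am * dd ap bm * dd bp am * dd bp bm) 0); auto. nra.
Qed.


Lemma trace_formula A B p q r s la ka mb nb :
  dd p q <> 0 -> dd r s <> 0 ->
  m11 A * cv1 p + m12 A * cv2 p = la * cv1 p -> m21 A * cv1 p + m22 A * cv2 p = la * cv2 p ->
  m11 A * cv1 q + m12 A * cv2 q = ka * cv1 q -> m21 A * cv1 q + m22 A * cv2 q = ka * cv2 q ->
  m11 B * cv1 r + m12 B * cv2 r = mb * cv1 r -> m21 B * cv1 r + m22 B * cv2 r = mb * cv2 r ->
  m11 B * cv1 s + m12 B * cv2 s = nb * cv1 s -> m21 B * cv1 s + m22 B * cv2 s = nb * cv2 s ->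
  mtr (mmul A B) * (dd p q * dd r s) =
  (la*mb + ka*nb) * (dd p s * dd r q) - (la*nb + ka*mb) * (dd p r * dd s q).
Proof.
  intros H1 H2 E1 E2 E3 E4 F1 F2 F3 F4.
  destruct (entries _ _ _ _ _ _ _ _ _ _ H1 E1 E2 E3 E4) as [a1 [a2 [a3 a4]]].
  destruct (entries _ _ _ _ _ _ _ _ _ _ H2 F1 F2 F3 F4) as [b1 [b2 [b3 b4]]].
  unfold mtr, mmul; simpl. rewrite a1, a2, a3, a4, b1, b2, b3, b4.
  unfold dd in *. field. auto.
Qed.

Lemma commute A B p q la ka mb nb :
  dd p q <> 0 ->
  m11 A * cv1 p + m12 A * cv2 p = la * cv1 p -> m21 A * cv1 p + m22 A * cv2 p = la * cv2 p ->
  m11 A * cv1 q + m12 A * cv2 q = ka * cv1 q -> m21 A * cv1 q + m22 A * cv2 q = ka * cv2 q ->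
  m11 B * cv1 p + m12 B * cv2 p = mb * cv1 p -> m21 B * cv1 p + m22 B * cv2 p = mb * cv2 p ->
  m11 B * cv1 q + m12 B * cv2 q = nb * cv1 q -> m21 B * cv1 q + m22 B * cv2 q = nb * cv2 q ->
  mmul A B = mmul B A.
Proof.
  intros H1 E1 E2 E3 E4 F1 F2 F3 F4.
  destruct (entries _ _ _ _ _ _ _ _ _ _ H1 E1 E2 E3 E4) as [a1 [a2 [a3 a4]]].
  destruct (entries _ _ _ _ _ _ _ _ _ _ H1 F1 F2 F3 F4) as [b1 [b2 [b3 b4]]].
  unfold mmul. rewrite a1, a2, a3, a4, b1, b2, b3, b4.
  unfold dd in *. f_equal; field; auto.
Qed.

Lemma tlen_rho M r : mdet M = 1 -> 1 < r -> mtr M = r + /r -> tlen M = 2 * ln r.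
Proof.
  intros Hd Hr Ht. rewrite tlen_formula; auto.
  - rewrite Ht. apply arcosh_rho; auto.
  - rewrite Ht. assert (0 < /r) by (apply Rinv_0_lt_compat; lra).
    assert (/r < 1) by (apply (Rmult_lt_reg_l r); [lra|]; rewrite Rinv_r; lra).
    assert (r * /r = 1) by (field; lra).
    nra.
Qed.

Lemma rho_exists t : 2 < t -> exists r, 1 < r /\ t = r + /r.
Proof.
  intros Ht. set (s := sqrt (t^2 - 4)).
  assert (Hs : 0 <= s) by apply sqrt_pos.
  assert (Hs2 : s^2 = t^2 - 4) by (apply pow2_sqrt; nra).
  exists ((t + s)/2). split; [lra|].
  assert (0 < (t+s)/2) by lra.
  assert (Hinv : /((t+s)/2) = (t-s)/2).
  { apply (Rmult_eq_reg_l ((t+s)/2)); [|lra]. rewrite Rinv_r; [|lra].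
    replace ((t+s)/2*((t-s)/2)) with ((t^2 - s^2)/4) by field. rewrite Hs2. field. }
  rewrite Hinv. field.
Qed.


Lemma sgn a d c : d > 0 -> a * d = c -> (c < 0 -> a < 0) /\ (c = 0 -> a = 0) /\ (c > 0 -> a > 0).
Proof.
  intros Hd E. destruct (Rtotal_order a 0) as [h|[h|h]].
  - assert (a * d < 0) by (replace (a*d) with (-((-a)*d)) by ring; assert (0 < (-a)*d) by (apply Rmult_lt_0_compat; lra); lra).
    repeat split; intros; lra.
  - rewrite h in E. rewrite Rmult_0_l in E. repeat split; intros; lra.
  - assert (0 < a * d) by (apply Rmult_lt_0_compat; lra). repeat split; intros; lra.
Qed.

Lemma Gc_sym p q x y : Gc p q x y = Gc q p x y.
Proof. unfold Gc; ring. Qed.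

Theorem theorem2p5 (A B : M2) (ap am bp bm : P1) :
  in_SL2 A -> in_SL2 B ->
  mmul A B <> mmul B A ->
  hyperbolic A -> hyperbolic B ->
  2 <= mtr A -> 2 <= mtr B ->
  attr_fp A ap -> rep_fp A am -> attr_fp B bp -> rep_fp B bm ->
  coherently_oriented A B ->
  (exists Ip Im, Iplus A B Ip /\ Iminus A B Im /\ forall x, ~ (Ip x /\ Im x)) ->
  (tlen (mmul A B) < tlen A + tlen B <-> geod_intersecting ap am bp bm) /\
  (tlen (mmul A B) = tlen A + tlen B <-> geod_asymptotically_parallel ap am bp bm) /\
  (tlen (mmul A B) > tlen A + tlen B <-> geod_ultraparallel ap am bp bm).
Proof.
  intros HA HB Hnc hA hB _ _ Hap Ham Hbp Hbm _ [Ip [Im0 [HIp [HIm Hdis]]]].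
  unfold in_SL2 in HA, HB.
  destruct (attr_data A ap hA Hap) as [la [Hla [EA1 EA2]]].
  destruct (rep_data A am hA Ham) as [ka [Hka [EA3 EA4]]].
  destruct (attr_data B bp hB Hbp) as [mb [Hmb [EB1 EB2]]].
  destruct (rep_data B bm hB Hbm) as [nb [Hnb [EB3 EB4]]].
  pose proof (quad_of A la ap HA EA1 EA2) as QA1.
  pose proof (quad_of A ka am HA EA3 EA4) as QA2.
  pose proof (quad_of B mb bp HB EB1 EB2) as QB1.
  pose proof (quad_of B nb bm HB EB3 EB4) as QB2.
  destruct (roots _ _ _ QA1 QA2 ltac:(lra)) as [PA SA].
  destruct (roots _ _ _ QB1 QB2 ltac:(lra)) as [PB SB].
  assert (DA : dd ap am <> 0) by (apply (distinct_eig A la ka); auto; lra).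
  assert (DB : dd bp bm <> 0) by (apply (distinct_eig B mb nb); auto; lra).
  destruct HIp as [ap' [bp' [Hap' [Hbp' HIp]]]].
  destruct HIm as [am' [bm' [Ham' [Hbm' HIm]]]].
  rewrite <- (attr_unique A ap ap' HA hA Hap Hap') in HIp.
  rewrite <- (attr_unique B bp bp' HB hB Hbp Hbp') in HIp.
  rewrite <- (rep_unique A am am' HA hA Ham Ham') in HIm.
  rewrite <- (rep_unique B bm bm' HB hB Hbm Hbm') in HIm.
  pose proof (PD_pos _ _ _ _ _ _ _ _ _ _ HIp HIm Hdis) as HPD.
  pose proof (trace_formula A B ap am bp bm la ka mb nb DA DB EA1 EA2 EA3 EA4 EB1 EB2 EB3 EB4) as TF.
  set (P := dd ap bm * dd bp am) in *. set (Q := dd ap bp * dd bm am) in *.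
  set (t := mtr (mmul A B)) in *.
  assert (Pl : dd ap am * dd bp bm = P - Q) by (unfold P, Q, dd; ring).
  rewrite Pl in TF.
  assert (HDP : (P - Q) * P > 0).
  { rewrite <- Pl. unfold P. replace (dd ap am * dd bp bm * (dd ap bm * dd bp am)) with
      (dd ap am * dd ap bm * dd bp am * dd bp bm) by ring. lra. }
  assert (HP : P <> 0) by (intro Z; rewrite Z in HDP; lra).
  set (T0 := la*mb + ka*nb) in *. set (T1 := la*nb + ka*mb) in *.
  assert (T01 : T0 - T1 > 0).
  { replace (T0 - T1) with ((la - ka)*(mb - nb)) by (unfold T0, T1; ring).
    apply Rmult_lt_0_compat; lra. }
  assert (Ht0 : (t - T0) * ((P - Q) * P) = (T0 - T1) * (P * Q)).
  { replace ((t - T0) * ((P - Q) * P)) with (t * (P - Q) * P - T0 * (P - Q) * P) by ring.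
    rewrite TF. ring. }
  assert (Ht1 : (t - T1) * ((P - Q) * P) = (T0 - T1) * (P * P)).
  { replace ((t - T1) * ((P - Q) * P)) with (t * (P - Q) * P - T1 * (P - Q) * P) by ring.
    rewrite TF. ring. }
  assert (Hka' : ka = /la) by (apply (Rmult_eq_reg_l la); [rewrite Rinv_r; lra | lra]).
  assert (Hnb' : nb = /mb) by (apply (Rmult_eq_reg_l mb); [rewrite Rinv_r; lra | lra]).
  assert (T1ge : T1 >= 2).
  { assert (E : T1 - 2 = (la - mb)^2/(la*mb)) by (unfold T1; rewrite Hka', Hnb'; field; lra).
    assert (0 <= (la - mb)^2/(la*mb)) by (apply Rdiv_le_0_compat; [apply pow2_ge_0|apply Rmult_lt_0_compat; lra]).
    lra. }
  assert (tgt : t > 2).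
  { assert (0 < (T0 - T1) * (P * P)).
    { apply Rmult_lt_0_compat; [lra|]. replace (P*P) with (P^2) by ring. apply pow2_gt_0; auto. }
    destruct (sgn _ _ _ HDP Ht1) as [_ [_ h]]. specialize (h H). lra. }
  destruct (rho_exists t ltac:(lra)) as [r [Hr Htr]].
  assert (LA : tlen A = 2 * ln la) by (apply tlen_rho; auto; lra).
  assert (LB : tlen B = 2 * ln mb) by (apply tlen_rho; auto; lra).
  assert (HAB : mdet (mmul A B) = 1).
  { transitivity (mdet A * mdet B); [unfold mdet, mmul; simpl; ring | rewrite HA, HB; ring]. }
  assert (LAB : tlen (mmul A B) = 2 * ln r) by (apply tlen_rho; auto).
  set (X := la * mb).
  assert (HX : 1 < X) by (unfold X; assert (0 < (la-1)*(mb-1)) by (apply Rmult_lt_0_compat; lra); lra).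
  assert (T0X : T0 = X + /X) by (unfold T0, X; rewrite Hka', Hnb'; field; lra).
  assert (SX : tlen A + tlen B = 2 * ln X) by (rewrite LA, LB; unfold X; rewrite ln_mult; lra).
  destruct (cmp_f r X Hr HX) as [c1 [c2 c3]].
  assert (T01' : T0 - T1 > 0) by lra.
  destruct (sgn _ _ _ HDP Ht0) as [s1 [s2 s3]].
  apply (trich_logic _ _ _ (P * Q)).
  -
    intros [[x y] [G1 G2]]. rewrite geod_c in G1, G2.
    destruct G1 as [Hy G1]; destruct G2 as [_ G2]. unfold in_H in Hy.
    change (Re (x,y)) with x in *; change (Im (x,y)) with y in *.
    pose proof (inter_le _ _ _ _ _ _ G1 G2) as Hle. unfold PQ in Hle. fold P Q in Hle.
    destruct (Rle_lt_or_eq_dec _ _ Hle) as [|Z]; auto. exfalso.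
    assert (HQ : Q = 0) by (apply Rmult_integral in Z; destruct Z; tauto).
    assert (same : ap = bp /\ am = bm).
    { unfold Q in HQ. apply Rmult_integral in HQ. destruct HQ as [Z1|Z1]; apply dd_eq in Z1.
      - subst bp. split; auto. apply (shared_geod ap am bm x y); auto.
      - subst bm. split; auto. apply (shared_geod am ap bp x y); auto; rewrite Gc_sym; auto. }
    destruct same; subst bp bm.
    apply Hnc. apply (commute A B ap am la ka mb nb); auto.
  -
    intros [_ Hs]. 
    destruct Hs as [E|[E|[E|E]]].
    + unfold Q. rewrite E. assert (dd bp bp = 0) by (apply dd_eq; auto). rewrite H; ring.
    + exfalso. apply HP. unfold P. rewrite E. assert (dd bm bm = 0) by (apply dd_eq; auto).
      rewrite H; ring.
    + exfalso. apply HP. unfold P. rewrite E. assert (dd bp bp = 0) by (apply dd_eq; auto).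
      rewrite H; ring.
    + unfold Q. rewrite E. assert (dd bm bm = 0) by (apply dd_eq; auto). rewrite H; ring.
  -
    intros [Ni Ns].
    assert (Q1 : dd ap bp <> 0) by (intro Z; apply dd_eq in Z; apply Ns; unfold share_endpoint; tauto).
    assert (Q2 : dd bm am <> 0) by (intro Z; apply dd_eq in Z; apply Ns; unfold share_endpoint; auto).
    assert (HQ : Q <> 0) by (unfold Q; apply Rmult_integral_contrapositive; auto).
    assert (HPQ : P * Q <> 0) by (apply Rmult_integral_contrapositive; auto).
    destruct (Rtotal_order (P*Q) 0) as [N|[N|N]]; try tauto.
    exfalso. apply Ni. apply construct. unfold PQ. fold P Q. auto.
  -
    destruct (classic (geod_intersecting ap am bp bm)) as [|Ni]; [left; auto|right].
    destruct (classic (share_endpoint ap am bp bm)) as [Hs|Ns].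
    + left. split; auto. intros [[E1 E2]|[E1 E2]].
      * subst bp bm. apply Hnc. apply (commute A B ap am la ka mb nb); auto.
      * apply HP. unfold P. rewrite E1. assert (dd bm bm = 0) by (apply dd_eq; auto). rewrite H; ring.
    + right. split; auto.
  - intros N. rewrite LAB, SX.
    assert (t < T0).
    { assert ((T0 - T1) * (P * Q) < 0) by (replace ((T0 - T1) * (P * Q)) with (-((T0-T1)*(-(P*Q)))) by ring;
        assert (0 < (T0-T1)*(-(P*Q))) by (apply Rmult_lt_0_compat; lra); lra).
      specialize (s1 H); lra. }
    assert (r < X) by (apply c1; rewrite <- Htr, <- T0X; auto).
    assert (ln r < ln X) by (apply ln_increasing; lra). lra.
  - intros N. rewrite LAB, SX.
    assert (t = T0) by (assert (h : (T0 - T1) * (P * Q) = 0) by (rewrite N; ring); specialize (s2 h); lra).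
    assert (r = X) by (apply c2; rewrite <- Htr, <- T0X; auto). subst; auto.
  - intros N. rewrite LAB, SX.
    assert (t > T0) by (assert (h : (T0 - T1) * (P * Q) > 0) by (apply Rmult_lt_0_compat; lra); specialize (s3 h); lra).
    assert (r > X) by (apply c3; rewrite <- Htr, <- T0X; auto).
    assert (ln X < ln r) by (apply ln_increasing; lra). lra.
Qed.
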